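(* Let $G,H$ be finite groups, $U\leq G\times H$ a subdirect product, and $A$ an abelian group satisfying the Hypothesis for a set of primes $\pi$. Then $U$ is $A$-extensible if and only if for every $p\in\pi$, $k_1(U')$ contains a Sylow $p$-subgroup of $G'\cap k_1(U)$; equivalently, if and only if for every $p\in\pi$, $k_2(U')$ contains a Sylow $p$-subgroup of $H'\cap k_2(U)$.
   Context: For $U\leq G\times H$: $p_1(U)=\{g:\exists h,(g,h)\in U\}$, $p_2(U)=\{h:\exists g,(g,h)\in U\}$, $k_1(U)=\{g:(g,1)\in U\}$, $k_2(U)=\{h:(1,h)\in U\}$; $U$ is a subdirect product if $p_1(U)=G$, $p_2(U)=H$. $X'$ is the commutator subgroup of $X$. An abelian group $A$ satisfies the Hypothesis (with set of primes $\pi$) if there is a unique set of primes $\pi$ such that for every $n\in\mathbb{N}$ the $n$-torsion part of $A$ is cyclic of order $n_\pi$ (the $\pi$-part of $n$). $U$ is $A$-extensible if every homomorphism $U\to A$ extends to a homomorphism $G\times H\to A$. *)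

(* Defs.v *)
From HB Require Import structures.
From mathcomp Require Import all_boot all_order all_algebra all_fingroup all_solvable.
Set Implicit Arguments. Unset Strict Implicit. Unset Printing Implicit Defensive.
Import GRing.Theory.
Local Open Scope group_scope.

Definition p1 (gT hT : finGroupType) (U : {set gT * hT}) : {set gT} :=
  [set x.1 | x in U].
Definition p2 (gT hT : finGroupType) (U : {set gT * hT}) : {set hT} :=
  [set x.2 | x in U].
Definition k1 (gT hT : finGroupType) (U : {set gT * hT}) : {set gT} :=
  [set g | (g, 1) \in U].
Definition k2 (gT hT : finGroupType) (U : {set gT * hT}) : {set hT} :=
  [set h | (1, h) \in U].

Definition subdirect (gT hT : finGroupType) (G : {group gT}) (H : {group hT})
  (U : {group gT * hT}) : Prop :=
  [/\ U \subset setX G H, p1 U = G & p2 U = H].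

Definition is_hom_into (T : finGroupType) (A : zmodType) (D : {set T}) (f : T -> A) :=
  forall x y, x \in D -> y \in D -> f (x * y) = (f x + f y)%R.

Definition extensible (gT hT : finGroupType) (G : {group gT}) (H : {group hT})
  (U : {group gT * hT}) (A : zmodType) : Prop :=
  forall f : gT * hT -> A, is_hom_into U f ->
    exists F : gT * hT -> A, is_hom_into (setX G H) F /\ {in U, F =1 f}.

Definition torsion_cyclic (A : zmodType) (n m : nat) : Prop :=
  exists g : A,
    (forall a : A, (a *+ n = 0)%R <-> exists k, a = (g *+ k)%R) /\
    (forall k, (g *+ k = 0)%R <-> (m %| k)%N).

Definition hypothesis (A : zmodType) (pi : nat_pred) : Prop :=
  {in pi, forall p, prime p} /\
  forall n : nat, (0 < n)%N -> torsion_cyclic A n (n`_pi)%N.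

(* Main.v *)
Require Import Defs.
From HB Require Import structures.
From mathcomp Require Import all_boot all_order all_algebra all_fingroup all_solvable.
From mathcomp Require Import zify.
Set Implicit Arguments. Unset Strict Implicit. Unset Printing Implicit Defensive.
Import GRing.Theory.
Local Open Scope group_scope.

Section Arith.
Variables (A : zmodType) (pi : nat_pred).
Hypothesis hA : hypothesis A pi.

Lemma hyp_tor0 n (a : A) : (0 < n)%N -> pi^'.-nat n -> (a *+ n = 0)%R -> a = 0%R.
Proof.
move=> n0 pn an; case: hA => _ /(_ n n0) [g [Hg1 Hg2]].
rewrite part_p'nat // in Hg2.
have g0 : g = 0%R by have := (proj2 (Hg2 1%N) (dvd1n 1)); rewrite mulr1n.
by have [k ->] := proj1 (Hg1 a) an; rewrite g0 mul0rn.
Qed.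

Lemma hyp_elt p : p \in pi -> exists e : A, (e *+ p = 0)%R /\ e <> 0%R.
Proof.
move=> pp; case: hA => pr Ht.
have prp := pr p pp.
have [g [_ Hg2]] := Ht p (prime_gt0 prp).
rewrite part_pnat_id ?pnatE // in Hg2.
exists g; split; first exact: (proj2 (Hg2 p) (dvdnn p)).
move=> g0; have := proj1 (Hg2 1%N); rewrite g0 mul0rn => /(_ erefl).
by rewrite dvdn1 => /eqP p1; rewrite p1 in prp.
Qed.

Lemma hyp_div d m (c : A) : (0 < d)%N -> (c *+ d = 0)%R -> (0 < m)%N ->
  exists a : A, (a *+ m = c)%R.
Proof.
move=> d0 cd m0; case: hA => _ Ht.
have N0 : (0 < m * d)%N by rewrite muln_gt0 m0 d0.
have [g [Hg1 Hg2]] := Ht _ N0.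
set M := ((m * d)`_pi)%N in Hg2.
have [k ck] : exists k, c = (g *+ k)%R.
  by apply: (proj1 (Hg1 c)); rewrite mulnC mulrnA cd mul0rn.
have Mk : (M %| k * d)%N by apply/Hg2; rewrite mulrnA -ck.
have [t kt] : exists t, k = (m`_pi * t)%N.
  move: Mk; rewrite /M partnM // -{2}(partnC pi d0) mulnA.
  rewrite mulnAC.
  rewrite dvdn_pmul2r ?part_gt0 // Gauss_dvdl ?coprime_partC // => /dvdnP [t ->].
  by exists t; rewrite mulnC.
have cop : coprime m`_pi^' M by apply: (p'nat_coprime (part_pnat _ _)); exact: part_pnat.
have [km kn e1 _] := egcdnP M (part_gt0 pi^' m).
rewrite (eqP cop) in e1.
have hg : ((g *+ km) *+ m`_pi^' = g)%R.
  by rewrite -mulrnA e1 mulrnDr [(kn * M)%N]mulnC mulrnA (proj2 (Hg2 M) (dvdnn M)) mul0rn add0r.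
exists ((g *+ km) *+ t)%R.
rewrite -mulrnA.
have -> : (t * m = m`_pi^' * (m`_pi * t))%N.
  by rewrite -{1}(partnC pi m0); set x := (m`_pi)%N; set y := (m`_pi^')%N; lia.
by rewrite mulrnA hg ck kt.
Qed.
End Arith.
Section Hom.
Variables (T : finGroupType) (A : zmodType).
Implicit Types (D X B : {group T}) (f : T -> A).

Lemma hom1 D f : is_hom_into D f -> f 1 = 0%R.
Proof.
move=> hf; have e := hf 1 1 (group1 D) (group1 D); rewrite mulg1 in e.
by have := congr1 (fun z => z - f 1%g)%R e; rewrite subrr addrK => <-.
Qed.

Lemma homV D f x : is_hom_into D f -> x \in D -> f x^-1 = (- f x)%R.
Proof.
move=> hf Dx; have := hf _ _ (groupVr Dx) Dx; rewrite mulVg (hom1 hf).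
by move/esym/eqP; rewrite addr_eq0 => /eqP.
Qed.

Lemma homX D f x n : is_hom_into D f -> x \in D -> f (x ^+ n) = (f x *+ n)%R.
Proof.
move=> hf Dx; elim: n => [|n IH]; first by rewrite expg0 (hom1 hf) mulr0n.
by rewrite expgS hf ?groupX // IH mulrS.
Qed.

Lemma homM D f (u v : T) : is_hom_into D f -> u \in D -> v \in D ->
  f (u * v) = (f u + f v)%R.
Proof. by move=> hf; apply: hf. Qed.

Lemma hom_commg D f (y z : T) : is_hom_into D f -> y \in D -> z \in D -> f [~ y, z] = 0%R.
Proof.
move=> hf Dy Dz; rewrite /commg conjgE.
have Dyi := groupVr Dy; have Dzi := groupVr Dz; have Dyz := groupM Dy Dz.
have Dzyz := groupM Dzi Dyz.
rewrite !(homM hf) // (homV hf Dy) (homV hf Dz).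
by rewrite [(- f z + _)%R]addrCA addNr addr0 addNr.
Qed.

Lemma hom_der D f : is_hom_into D f -> {in D^`(1), forall c, f c = 0%R}.
Proof.
move=> hf.
have gK : group_set [set y in D | f y == 0%R].
  apply/group_setP; split; first by rewrite inE group1 (hom1 hf) eqxx.
  move=> y z; rewrite !inE => /andP [Dy /eqP fy] /andP [Dz /eqP fz].
  by rewrite groupM // hf // fy fz addr0 eqxx.
have sub : D^`(1) \subset Group gK.
  rewrite derg1 /commg_set gen_subG; apply/subsetP => c /imset2P [y z Dy Dz ->].
  by rewrite inE /= groupR //=; apply/eqP; apply: (hom_commg hf).
by move=> c /(subsetP sub); rewrite inE => /andP [_ /eqP].
Qed.

Section Step.
Variables (X B : {group T}) (phi : T -> A) (x : T) (a : A).
Hypotheses (sXB : X^`(1) \subset B) (sBX : B \subset X) (hphi : is_hom_into B phi)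
  (kphi : {in X^`(1), forall c, phi c = 0%R}) (Xx : x \in X)
  (ha : forall j, x ^+ j \in B -> phi (x ^+ j) = (a *+ j)%R).

Let psi y := if [pick k : 'I_#[x] | y * (x ^+ k)^-1 \in B] is Some k
  then (phi (y * (x ^+ k)^-1) + a *+ k)%R else 0%R.

Let cmp y k1 k2 : (k1 <= k2)%N -> y * (x ^+ k1)^-1 \in B -> y * (x ^+ k2)^-1 \in B ->
  (phi (y * (x ^+ k1)^-1) + a *+ k1 = phi (y * (x ^+ k2)^-1) + a *+ k2)%R.
Proof.
move=> le B1 B2; move: (subnK le); move: (k2 - k1)%N => d Hd; rewrite -Hd.
have E : y * (x ^+ k1)^-1 = (y * (x ^+ (d + k1))^-1) * x ^+ d.
  by rewrite expgD invMg mulgA mulgKV.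
have Bd : x ^+ d \in B.
  have : (y * (x ^+ (d + k1))^-1)^-1 * (y * (x ^+ k1)^-1) \in B.
    by rewrite groupM ?groupV // Hd.
  by rewrite E mulKg.
rewrite E (homM hphi) // ?Hd // ha //.
by rewrite -Hd mulrnDr addrA.
Qed.

Let wd y k : y * (x ^+ k)^-1 \in B -> psi y = (phi (y * (x ^+ k)^-1) + a *+ k)%R.
Proof.
move=> Bk; rewrite /psi; case: pickP => [k0 /= Hk0 | Hn].
  by case: (leqP k0 k) => [le | /ltnW le]; [apply: cmp | apply/esym/cmp].
have lt : (k %% #[x] < #[x])%N by rewrite ltn_pmod ?order_gt0.
by have := Hn (Ordinal lt); rewrite /= expg_mod_order Bk.
Qed.

Lemma ext_step : exists (B2 : {group T}) (psi : T -> A),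
  [/\ B \subset B2, B2 \subset X, x \in B2, is_hom_into B2 psi & {in B, psi =1 phi}]
  /\ psi x = a.
Proof.
have nBX : B <| X by apply: sub_der1_normal.
have nBx : <[x]> \subset 'N(B).
  by rewrite cycle_subG; apply: (subsetP (normal_norm nBX)).
have memB2 : forall y, y \in (B <*> <[x]>)%G -> exists2 b, b \in B & exists i, y = b * x ^+ i.
  move=> y; rewrite /= norm_joinEr // => /mulsgP [b z Bb /cycleP [i ->] ->].
  by exists b => //; exists i.
exists (B <*> <[x]>)%G, psi; split; last first.
  rewrite (wd (k := 1)) ?expg1 ?mulgV ?group1 // (hom1 hphi) add0r.
  by rewrite mulr1n.
split.
- exact: joing_subl.
- by rewrite join_subG sBX cycle_subG.
- by apply: (subsetP (joing_subr _ _)); exact: cycle_id.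
- move=> y z /memB2 [b Bb [i ->]] /memB2 [c Bc [j ->]].
  have Xi : (x ^+ i)^-1 \in X by rewrite groupV groupX.
  have cJ : c ^ (x ^+ i)^-1 \in B by rewrite memJ_norm // (subsetP (normal_norm nBX)).
  have E : b * x ^+ i * (c * x ^+ j) = (b * c ^ (x ^+ i)^-1) * x ^+ (i + j).
    by rewrite conjgE invgK expgD !mulgA mulgKV.
  have Bbc : b * c ^ (x ^+ i)^-1 \in B by rewrite groupM.
  rewrite E (wd (k := i + j)) ?mulgK // (wd (k := i)) ?mulgK //.
  rewrite (wd (k := j)) ?mulgK // (homM hphi) //.
  have -> : phi (c ^ (x ^+ i)^-1) = phi c.
    have Cc : [~ c, (x ^+ i)^-1] \in X^`(1).
      by apply: mem_commg => //; apply: (subsetP sBX).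
    rewrite conjg_mulR (homM hphi) //; last exact: (subsetP sXB).
    by rewrite (kphi Cc) addr0.
  by rewrite mulrnDr addrACA.
- move=> y By; rewrite (wd (k := 0)) ?expg0 ?invg1 ?mulg1 //.
  by rewrite mulr0n addr0.
Qed.
End Step.


Lemma ext_full (pi : nat_pred) (hA : hypothesis A pi) (X : {group T}) :
  forall (B : {group T}) (phi : T -> A),
  X^`(1) \subset B -> B \subset X -> is_hom_into B phi ->
  {in X^`(1), forall c, phi c = 0%R} ->
  exists F : T -> A, is_hom_into X F /\ {in B, F =1 phi}.
Proof.
suff main : forall n (B : {group T}) (phi : T -> A), (#|X| - #|B| < n)%N ->
  X^`(1) \subset B -> B \subset X -> is_hom_into B phi ->
  {in X^`(1), forall c, phi c = 0%R} ->
  exists F : T -> A, is_hom_into X F /\ {in B, F =1 phi}.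
  by move=> B phi; apply: (main (#|X| - #|B|).+1).
elim=> [//|n IH] B phi lt sXB sBX hphi kphi.
case: (boolP (X \subset B)) => [XB|nXB].
  exists phi; split=> // y z Xy Xz; apply: hphi; exact: (subsetP XB).
have [x Xx Bx] := subsetPn nXB.
have nBX : B <| X by apply: sub_der1_normal.
have Nx : x \in 'N(B) by apply: (subsetP (normal_norm nBX)).
set m := #[coset B x].
have memj : forall j, (x ^+ j \in B) = (m %| j)%N.
  move=> j; rewrite order_dvdn -morphX //; apply/idP/eqP.
    by move/coset_id.
  by apply: coset_idr; rewrite groupX.
have Bm : x ^+ m \in B by rewrite memj.
have m0 : (0 < m)%N by rewrite order_gt0.
have [a ha] : exists a : A, (a *+ m)%R = phi (x ^+ m).
  apply: (hyp_div hA (order_gt0 x)) => //.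
  rewrite -(homX _ hphi Bm) -expgM mulnC expgM expg_order expg1n.
  exact: hom1 hphi.
have haj : forall j, x ^+ j \in B -> phi (x ^+ j) = (a *+ j)%R :> A.
  move=> j; rewrite memj => /dvdnP [q ->].
  by rewrite mulnC expgM (homX _ hphi Bm) -ha -mulrnA.
have [B2 [psi [[sBB2 sB2X xB2 hpsi epsi] _]]] := ext_step sXB sBX hphi kphi Xx haj.
have lt2 : (#|B| < #|B2|)%N.
  by apply: proper_card; apply/properP; split=> //; exists x.
have le2 : (#|B2| <= #|X|)%N by apply: subset_leq_card.
have lt3 : (#|X| - #|B2| < n)%N by rewrite ltnS in lt; lia.
have kpsi : {in X^`(1), forall c, psi c = 0%R}.
  by move=> c Xc; rewrite epsi ?kphi //; apply: (subsetP sXB).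
have [F [hF eF]] := IH B2 psi lt3 (subset_trans sXB sBB2) sB2X hpsi kpsi.
exists F; split=> // y By; rewrite eF ?epsi //; exact: (subsetP sBB2).
Qed.

End Hom.
Section Prod.
Variables gT hT : finGroupType.
Implicit Types V : {group gT * hT}.

Lemma k1_group V : group_set (k1 V).
Proof.
apply/group_setP; split; first by rewrite inE group1.
move=> x y; rewrite !inE => Vx Vy.
by have := groupM Vx Vy; rewrite {1}/mul /= /mul_pair /= mulg1.
Qed.
Canonical k1_grp V := Group (k1_group V).

Lemma k2_group V : group_set (k2 V).
Proof.
apply/group_setP; split; first by rewrite inE group1.
move=> x y; rewrite !inE => Vx Vy.
by have := groupM Vx Vy; rewrite {1}/mul /= /mul_pair /= mulg1.
Qed.
Canonical k2_grp V := Group (k2_group V).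

Lemma card_fst V : #|V| = (#|fst @* V| * #|k2 V|)%N.
Proof.
rewrite card_morphim setTI mulnC.
have -> : #|k2 V| = #|V :&: 'ker (@fst gT hT)|.
  rewrite -(card_injm (injm_pair1g gT hT) (subsetT (k2 V))) morphim_pair1g.
  apply: eq_card => -[g h]; rewrite !inE /=.
  by case: eqP => [->|]; rewrite ?andbT ?andbF.
by rewrite LagrangeI.
Qed.

Lemma card_snd V : #|V| = (#|snd @* V| * #|k1 V|)%N.
Proof.
rewrite card_morphim setTI mulnC.
have -> : #|k1 V| = #|V :&: 'ker (@snd gT hT)|.
  rewrite -(card_injm (injm_pairg1 gT hT) (subsetT (k1 V))) morphim_pairg1.
  apply: eq_card => -[g h]; rewrite !inE /=.
  by case: eqP => [->|]; rewrite ?andbT ?andbF.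
by rewrite LagrangeI.
Qed.

Lemma fst_p1 V : fst @* V = p1 V.
Proof. by rewrite morphimEsub ?subsetT. Qed.
Lemma snd_p2 V : snd @* V = p2 V.
Proof. by rewrite morphimEsub ?subsetT. Qed.

Lemma fst_der V : fst @* V^`(1) = (fst @* V)^`(1).
Proof. by rewrite morphim_der ?subsetT. Qed.
Lemma snd_der V : snd @* V^`(1) = (snd @* V)^`(1).
Proof. by rewrite morphim_der ?subsetT. Qed.

Lemma fst_setX (G : {group gT}) (H : {group hT}) : fst @* setX G H = G.
Proof.
rewrite fst_p1; apply/setP => g; apply/imsetP/idP => [[y]|Gg].
  by rewrite inE => /andP [Gy _] ->.
by exists (g, 1) => //; rewrite inE Gg group1.
Qed.
Lemma snd_setX (G : {group gT}) (H : {group hT}) : snd @* setX G H = H.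
Proof.
rewrite snd_p2; apply/setP => g; apply/imsetP/idP => [[y]|Gg].
  by rewrite inE => /andP [_ Gy] ->.
by exists (1, g) => //; rewrite inE Gg group1.
Qed.

Lemma setX_der (G : {group gT}) (H : {group hT}) :
  (setX G H)^`(1) = setX G^`(1) H^`(1).
Proof.
apply/eqP; rewrite eqEsubset; apply/andP; split.
  apply/subsetP => x Dx; rewrite inE; apply/andP; split.
    have : fst x \in fst @* (setX G H)^`(1) by apply: mem_morphim; rewrite ?inE.
    by rewrite fst_der fst_setX.
  have : snd x \in snd @* (setX G H)^`(1) by apply: mem_morphim; rewrite ?inE.
  by rewrite snd_der snd_setX.
apply/subsetP => -[g h] /setXP [Gg Hh].
have -> : (g, h) = (g, 1) * (1, h) by rewrite {1}/mul /= /mul_pair /= mulg1 mul1g.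
have s1 : setX G^`(1) 1 \subset (setX G H)^`(1).
  rewrite -morphim_pairg1 morphim_der ?subsetT // dergS //.
  by rewrite /= morphim_pairg1 setXS ?sub1G.
have s2 : setX 1 H^`(1) \subset (setX G H)^`(1).
  rewrite -morphim_pair1g morphim_der ?subsetT // dergS //.
  by rewrite /= morphim_pair1g setXS ?sub1G.
rewrite groupM //; [apply: (subsetP s1) | apply: (subsetP s2)]; by rewrite !inE /= ?Gg ?Hh ?eqxx.
Qed.

End Prod.
Lemma sylow_idx (T : finGroupType) (K : {group T}) (S : {group T}) p i :
  prime p -> S \subset K -> #|K| = (#|S| * i)%N ->
  (exists P : {group T}, p.-Sylow(K) P /\ P \subset S) <-> ~~ (p %| i)%N.
Proof.
move=> pp sSK eK.
have i0 : (0 < i)%N.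
  by case: i eK => // ; rewrite muln0 => K0; have := cardG_gt0 K; rewrite K0.
have S0 : (0 < #|S|)%N by rewrite cardG_gt0.
have eKp : (#|K|`_p = #|S|`_p * i`_p)%N by rewrite eK partnM.
rewrite -p'natE // -partn_eq1 //.
split.
  move=> [P [sylP sPS]]; move: sylP; rewrite pHallE => /andP [_ /eqP cP].
  have : (#|S|`_p * i`_p %| #|S|`_p * 1)%N.
    rewrite muln1 -eKp -cP.
    rewrite -(part_pnat_id (pi := p) (n := #|P|)); last by rewrite cP part_pnat.
    by apply: partn_dvd => //; apply: cardSg.
  by rewrite dvdn_pmul2l ?part_gt0 // dvdn1.
move/eqP => ip; have [P sylP] := Sylow_exists p S.
exists P; split; last by case/andP: sylP.
move: sylP; rewrite !pHallE => /andP [sPS /eqP cP].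
by rewrite (subset_trans sPS sSK) cP eKp ip muln1 /=.
Qed.

Unset Implicit Arguments.
Set Strict Implicit.

Theorem corollary3p3 (gT hT : finGroupType) (G : {group gT}) (H : {group hT})
  (U : {group gT * hT}) (A : zmodType) (pi : nat_pred) :
  subdirect G H U -> hypothesis A pi ->
  (extensible G H U A <->
     (forall p, p \in pi -> exists P : {group gT},
        p.-Sylow(G^`(1) :&: k1 U) P /\ P \subset k1 (U^`(1))))
  /\
  (extensible G H U A <->
     (forall p, p \in pi -> exists Q : {group hT},
        p.-Sylow(H^`(1) :&: k2 U) Q /\ Q \subset k2 (U^`(1)))).
Proof.
move=> [sUX p1U p2U] hA.
have prpi := hA.1.
have sDU : U^`(1) \subset U := der_sub 1 U.
have fU : fst @* U = G by rewrite fst_p1.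
have sU : snd @* U = H by rewrite snd_p2.
have fD : fst @* U^`(1) = G^`(1) by rewrite fst_der fU.
have sD : snd @* U^`(1) = H^`(1) by rewrite snd_der sU.
pose W := (U :&: setX G^`(1) H^`(1))%G.
have sDW : U^`(1) \subset W.
  rewrite subsetI sDU; apply/subsetP => x Dx; rewrite inE.
  have Gx : x.1 \in G^`(1) by rewrite -fD; apply: (@mem_morphim _ _ _ [morphism of @fst gT hT]) Dx; rewrite inE.
  have Hx : x.2 \in H^`(1) by rewrite -sD; apply: (@mem_morphim _ _ _ [morphism of @snd gT hT]) Dx; rewrite inE.
  by apply/andP; split; [exact: Gx | exact: Hx].
have fW : fst @* W = G^`(1).
  apply/eqP; rewrite eqEsubset; apply/andP; split; last by rewrite -fD; apply: morphimS.
  by apply/subsetP => g /morphimP [x _ Wx ->]; move: Wx; rewrite !inE => /andP [_ /andP []].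
have sW : snd @* W = H^`(1).
  apply/eqP; rewrite eqEsubset; apply/andP; split; last by rewrite -sD; apply: morphimS.
  by apply/subsetP => g /morphimP [x _ Wx ->]; move: Wx; rewrite !inE => /andP [_ /andP []].
have k2W : k2 W = H^`(1) :&: k2 U.
  by apply/setP => h; rewrite !inE group1 /= andbC.
have k1W : k1 W = G^`(1) :&: k1 U.
  by apply/setP => h; rewrite !inE group1 /= andbT andbC.
have cW1 := card_fst W; rewrite fW k2W in cW1.
have cW2 := card_snd W; rewrite sW k1W in cW2.
have cD1 := card_fst U^`(1); rewrite fD in cD1.
have cD2 := card_snd U^`(1); rewrite sD in cD2.
set i := #|W : U^`(1)|.
have eWD : #|W| = (#|U^`(1)| * i)%N by rewrite Lagrange.
have eK2 : #|H^`(1) :&: k2 U| = (#|k2 U^`(1)| * i)%N.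
  apply/eqP; rewrite -(eqn_pmul2l (cardG_gt0 G^`(1))) mulnA -cD1 -eWD cW1 //.
have eK1 : #|G^`(1) :&: k1 U| = (#|k1 U^`(1)| * i)%N.
  apply/eqP; rewrite -(eqn_pmul2l (cardG_gt0 H^`(1))) mulnA -cD2 -eWD cW2 //.
have sK1 : k1 U^`(1) \subset G^`(1) :&: k1 U.
  apply/subsetP => g; rewrite !inE => Dg; rewrite (subsetP sDU _ Dg) andbT.
  by rewrite -fD; apply: (@mem_morphim _ _ _ [morphism of @fst gT hT]) Dg; rewrite inE.
have sK2 : k2 U^`(1) \subset H^`(1) :&: k2 U.
  apply/subsetP => g; rewrite !inE => Dg; rewrite (subsetP sDU _ Dg) andbT.
  by rewrite -sD; apply: (@mem_morphim _ _ _ [morphism of @snd gT hT]) Dg; rewrite inE.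
suff key : extensible G H U A <-> (forall p, p \in pi -> ~~ (p %| i)%N).
  split; rewrite key; split => Hp p pp.
  - by apply/(sylow_idx (K := (G^`(1) :&: k1 U)%G) (S := k1_grp U^`(1)) (prpi p pp) sK1 eK1); apply: Hp.
  - by apply/(sylow_idx (K := (G^`(1) :&: k1 U)%G) (S := k1_grp U^`(1)) (prpi p pp) sK1 eK1); apply: Hp.
  - by apply/(sylow_idx (K := (H^`(1) :&: k2 U)%G) (S := k2_grp U^`(1)) (prpi p pp) sK2 eK2); apply: Hp.
  - by apply/(sylow_idx (K := (H^`(1) :&: k2 U)%G) (S := k2_grp U^`(1)) (prpi p pp) sK2 eK2); apply: Hp.
have nDW : W \subset 'N(U^`(1)).
  exact: subset_trans (subsetIl _ _) (normal_norm (der_normal 1 U)).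
split.
- move=> ext p pp; apply/negP => pdi.
  have [xb Wxb oxb] : {xb | xb \in W / U^`(1) & #[xb] = p}.
    by apply: Cauchy (prpi p pp) _; rewrite card_quotient.
  case/morphimP: Wxb => w Nw Ww exb.
  have memj : forall j, (w ^+ j \in U^`(1)) = (p %| j)%N.
    move=> j; rewrite -oxb exb order_dvdn -morphX //; apply/idP/eqP.
      by move/coset_id.
    by apply: coset_idr; rewrite groupX.
  have [e [ep e0]] := hyp_elt hA pp.
  have Uw : w \in U by have := subsetP (subsetIl U (setX G^`(1) H^`(1))) w Ww.
  have h0 : is_hom_into U^`(1) (fun _ : gT * hT => 0%R : A).
    by move=> ? ? _ _; rewrite addr0.
  have haj : forall j, w ^+ j \in U^`(1) -> (0%R : A) = (e *+ j)%R.
    by move=> j; rewrite memj => /dvdnP [q ->]; rewrite mulnC mulrnA ep mul0rn.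
  have [B2 [psi [[sDB2 sB2U wB2 hpsi epsi] psiw]]] :=
    @ext_step _ _ U (U^`(1))%G (fun _ => 0%R) w e (subxx _) sDU h0 (fun _ _ => erefl) Uw haj.
  have kpsi : {in U^`(1), forall c, psi c = 0%R} by move=> c Dc; rewrite epsi.
  have [f [hf ef]] := @ext_full _ _ _ hA U B2 psi sDB2 sB2U hpsi kpsi.
  have [F [hF eF]] := ext f hf.
  have Xw : w \in (setX G H)^`(1).
    rewrite setX_der; move: Ww; rewrite inE => /andP [_ ->] //.
  have := hom_der hF Xw; rewrite eF // ef // psiw.
  exact: e0.
- move=> Hi f hf.
  have i0 : (0 < i)%N := indexg_gt0 _ _.
  have pi'i : pi^'.-nat i.
    apply/pnatP => // q qp qi; rewrite !inE; apply/negP => qpi.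
    by have := Hi q qpi; rewrite qi.
  have fW0 : {in W, forall w, f w = 0%R}.
    move=> w Ww.
    have Nw : w \in 'N(U^`(1)) by apply: (subsetP nDW).
    have Uw : w \in U by have := subsetP (subsetIl U (setX G^`(1) H^`(1))) w Ww.
    have Dwi : w ^+ i \in U^`(1).
      apply: coset_idr; first by rewrite groupX.
      rewrite morphX //; apply/eqP; rewrite -order_dvdn /i -card_quotient //.
      by apply: order_dvdG; apply: mem_quotient.
    apply: (hyp_tor0 hA i0 pi'i); rewrite -(homX _ hf Uw).
    exact: (hom_der hf Dwi).
  have nYU : U \subset 'N((setX G H)^`(1)).
    exact: subset_trans sUX (normal_norm (der_normal 1 _)).
  pose Y := (setX G H)^`(1).
  pose phi y := if [pick u in U | y * u^-1 \in Y] is Some u then f u else 0%R.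
  have wd : forall y u, u \in U -> y * u^-1 \in Y -> phi y = f u.
    move=> y u Uu Yu; rewrite /phi; case: pickP => [u0 /andP [Uu0 Yu0] | Hn]; last first.
      by have := Hn u; rewrite Uu Yu.
    have Wu : u0 * u^-1 \in W.
      rewrite inE groupM ?groupV //= -setX_der.
      have -> : u0 * u^-1 = (y * u0^-1)^-1 * (y * u^-1) by rewrite invMg invgK mulgA mulgKV.
      by rewrite groupM ?groupV.
    have := fW0 _ Wu; rewrite (homM hf) ?groupV // (homV hf Uu) => e.
    by apply/eqP; rewrite -subr_eq0 e.
  have hphi : is_hom_into (Y <*> U)%G phi.
    move=> y z; rewrite /= norm_joinEr // => /mulsgP [c u Yc Uu ->] /mulsgP [c' u' Yc' Uu' ->].
    have E : c * u * (c' * u') = (c * c' ^ u^-1) * (u * u').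
      by rewrite conjgE invgK !mulgA mulgKV.
    have Yc'' : c' ^ u^-1 \in Y by rewrite memJ_norm // groupV (subsetP nYU).
    have Ycc : c * c' ^ u^-1 \in Y by rewrite groupM.
    rewrite E (wd _ (u * u')); last by rewrite mulgK.
      by rewrite (wd _ u) ?mulgK // (wd _ u') ?mulgK // (homM hf).
    by rewrite groupM.
  have kphi : {in (setX G H)^`(1), forall c, phi c = 0%R}.
    by move=> c Yc; rewrite (wd c 1) ?group1 ?invg1 ?mulg1 // (hom1 hf).
  have sYB : (setX G H)^`(1) \subset (Y <*> U)%G by apply: joing_subl.
  have sBX : (Y <*> U)%G \subset setX G H by rewrite join_subG der_sub sUX.
  have [F [hF eF]] := @ext_full _ _ _ hA (setX_group G H) _ phi sYB sBX hphi kphi.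
  exists F; split => // u Uu; rewrite eF; last by apply: (subsetP (joing_subr _ _)).
  by apply: wd; rewrite ?mulgV ?group1.
Qed.
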